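(* Assume (A2) and a congestion game payoff structure in which each resource reward $w_r$ is continuously differentiable. Then the steady-state game is a full potential game: there exists a continuously differentiable $U:\mathbb R^n_{\ge0}\to\mathbb R$ with $\mathcal F=\nabla U$ on $X_{\mathcal U_D}$. Moreover, if every $w_r$ is nonincreasing, the set of Nash equilibria of $\mathcal F$ is compact and convex; and if every $w_r$ is strictly decreasing, the equilibrium resource flows $\sigma_r(x)$, $r\in\mathcal R$, take the same value at every Nash equilibrium $x$ of $\mathcal F$.
   Context: Model: classes $c\in[C]$ with masses $m^c>0$, finite state sets $\mathcal S^c$, nonempty finite admissible action sets $\mathcal A^c(s)$ ($\mathcal A^c=\bigcup_s\mathcal A^c(s)$), transition kernels $\phi^c(\cdot\mid s,a)$. $\mathcal U^c_D$ = deterministic policies (maps assigning to each $s$ an action $u(s)\in\mathcal A^c(s)$), $n^c=|\mathcal U^c_D|$, $n=\sum_cn^c$. $\phi^{c,u}_{ss'}=\phi^c(s\mid s',u(s'))$. (A2): for all $c,u\in\mathcal U^c_D$, $\phi^{c,u}$ has exactly one recurrent communicating class; $\eta^{c,u}$ is the unique stationary distribution of the continuous-time chain with generator $\lambda(\phi^{c,u}-I)$. Congestion game payoff structure: all classes have the same action rate $\lambda>0$; there is a finite set of resources $\mathcal R$ and each action $a\in\mathcal A^c$ is a subset $a\subseteq\mathcal R$; each resource has a reward function $w_r:\mathbb R_{\ge0}\to\mathbb R$; for a state-action distribution $\nu=(\nu^c)_c$, $\nu^c\in\mathbb R_{\ge0}^{\mathcal S^c\times\mathcal A^c}$ with total mass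 $m^c$, the flow on $r$ is $\sigma_r=\lambda\sum_c\sum_{s\in\mathcal S^c}\sum_{a\in\mathcal A^c: r\in a}\nu^c[s,a]$ and the single-stage reward is $r^c(s,a,\nu)=\sum_{r\in a}w_r(\sigma_r)$. Steady-state game: $X_{\mathcal U_D}=\prod_c\{x^c\in\mathbb R_{\ge0}^{n^c}:\sum x^c=m^c\}$; for $x\in X_{\mathcal U_D}$, the induced steady-state flow is $\sigma_r(x)=\lambda\sum_c\sum_{s\in\mathcal S^c}\sum_{u\in\mathcal U^c_D: r\in u(s)}\eta^{c,u}(s)x^c[u]$ and $\mathcal F^c_u(x)=\sum_{s\in\mathcal S^c}\eta^{c,u}(s)\sum_{r\in u(s)}w_r(\sigma_r(x))$, $\mathcal F=(\mathcal F^c_u)_{c,u}\in\mathbb R^n$. $x$ is a Nash equilibrium of $\mathcal F$ if for all $c,u$: $x^c[u]>0\Rightarrow\mathcal F^c_u(x)\ge\mathcal F^c_v(x)$ for all $v\in\mathcal U^c_D$. *)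

(* Defs.v *)
From HB Require Import structures.
From mathcomp Require Import all_boot all_order all_algebra.
From mathcomp Require Import all_classical all_reals all_analysis.
Set Implicit Arguments. Unset Strict Implicit. Unset Printing Implicit Defensive.
Import Order.TTheory GRing.Theory Num.Theory.
Import numFieldNormedType.Exports.
Local Open Scope ring_scope.

(* Data of the model:
   Cl : finType of classes; St c : finite state set of class c;
   Rs : finite set of resources; an action is a subset of Rs, i.e. {set Rs};
   Adm c s : {set {set Rs}} = admissible actions A^c(s);
   phi c s' s a = phi^c(s' | s, a) (probability of next state s'). *)

Definition pol (Rs : finType) (Cl : finType) (St : Cl -> finType)
  (Adm : forall c, St c -> {set {set Rs}}) (c : Cl) : finType :=
  {f : {ffun St c -> {set Rs}} | [forall s, f s \in Adm c s]}.

Definition idx (Rs Cl : finType) (St : Cl -> finType)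
  (Adm : forall c, St c -> {set {set Rs}}) : finType :=
  {c : Cl & pol Adm c}.

(* phi^{c,u}_{s s'} = phi^c(s | s', u(s')) *)
Definition Phi (R : realType) (Rs Cl : finType) (St : Cl -> finType)
  (Adm : forall c, St c -> {set {set Rs}})
  (phi : forall c, St c -> St c -> {set Rs} -> R)
  (c : Cl) (u : pol Adm c) (s s' : St c) : R :=
  phi c s s' (val u s').

Definition trans_edge (R : realType) (Rs Cl : finType) (St : Cl -> finType)
  (Adm : forall c, St c -> {set {set Rs}})
  (phi : forall c, St c -> St c -> {set Rs} -> R)
  (c : Cl) (u : pol Adm c) : rel (St c) :=
  fun s t => 0 < Phi phi u t s.

Definition reach (R : realType) (Rs Cl : finType) (St : Cl -> finType)
  (Adm : forall c, St c -> {set {set Rs}})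
  (phi : forall c, St c -> St c -> {set Rs} -> R)
  (c : Cl) (u : pol Adm c) : rel (St c) :=
  connect (trans_edge phi u).

(* for a finite chain, a state is recurrent iff every state accessible from
   it leads back to it; recurrent communicating classes are the communicating
   classes of recurrent states *)
Definition recurrent_state (R : realType) (Rs Cl : finType) (St : Cl -> finType)
  (Adm : forall c, St c -> {set {set Rs}})
  (phi : forall c, St c -> St c -> {set Rs} -> R)
  (c : Cl) (u : pol Adm c) (s : St c) : Prop :=
  forall t, reach phi u s t -> reach phi u t s.

Definition unique_recurrent_class (R : realType) (Rs Cl : finType)
  (St : Cl -> finType) (Adm : forall c, St c -> {set {set Rs}})
  (phi : forall c, St c -> St c -> {set Rs} -> R)
  (c : Cl) (u : pol Adm c) : Prop :=
  exists s0, recurrent_state phi u s0 /\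
    forall s, recurrent_state phi u s -> reach phi u s s0 /\ reach phi u s0 s.

Definition A2 (R : realType) (Rs Cl : finType) (St : Cl -> finType)
  (Adm : forall c, St c -> {set {set Rs}})
  (phi : forall c, St c -> St c -> {set Rs} -> R) : Prop :=
  forall c (u : pol Adm c), unique_recurrent_class phi u.

(* eta is a stationary distribution of the continuous-time chain with
   generator lambda (phi^{c,u} - I) (column convention: (phi^{c,u}-I) eta = 0) *)
Definition ct_stationary (R : realType) (Rs Cl : finType) (St : Cl -> finType)
  (Adm : forall c, St c -> {set {set Rs}})
  (phi : forall c, St c -> St c -> {set Rs} -> R) (lam : R)
  (c : Cl) (u : pol Adm c) (eta : St c -> R) : Prop :=
  (forall s, 0 <= eta s) /\ \sum_s eta s = 1 /\
  forall s, \sum_s' lam * (Phi phi u s s' - (s == s')%:R) * eta s' = 0.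

(* coordinates of x in R^n, n = sum_c n^c, indexed by pairs (c,u) *)
Definition coord (R : realType) (I : finType) (x : 'rV[R]_#|I|) (i : I) : R :=
  x ord0 (enum_rank i).

Definition sigma (R : realType) (Rs Cl : finType) (St : Cl -> finType)
  (Adm : forall c, St c -> {set {set Rs}}) (lam : R)
  (eta : forall c, pol Adm c -> St c -> R)
  (x : 'rV[R]_#|idx Adm|) (r : Rs) : R :=
  lam * \sum_(i : idx Adm) \sum_(s : St (tag i) | r \in val (tagged i) s)
          eta (tag i) (tagged i) s * coord x i.

Definition payoff (R : realType) (Rs Cl : finType) (St : Cl -> finType)
  (Adm : forall c, St c -> {set {set Rs}}) (lam : R)
  (eta : forall c, pol Adm c -> St c -> R) (w : Rs -> R -> R)
  (i : idx Adm) (x : 'rV[R]_#|idx Adm|) : R :=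
  \sum_(s : St (tag i)) eta (tag i) (tagged i) s *
     \sum_(r in val (tagged i) s) w r (sigma lam eta x r).

Definition Xset (R : realType) (Rs Cl : finType) (St : Cl -> finType)
  (Adm : forall c, St c -> {set {set Rs}}) (mass : Cl -> R)
  (x : 'rV[R]_#|idx Adm|) : Prop :=
  (forall i, 0 <= coord x i) /\
  forall c, \sum_(u : pol Adm c) coord x (Tagged (pol Adm) u) = mass c.

Definition nash (R : realType) (Rs Cl : finType) (St : Cl -> finType)
  (Adm : forall c, St c -> {set {set Rs}}) (mass : Cl -> R) (lam : R)
  (eta : forall c, pol Adm c -> St c -> R) (w : Rs -> R -> R)
  (x : 'rV[R]_#|idx Adm|) : Prop :=
  Xset mass x /\
  forall i, 0 < coord x i ->
    forall v : pol Adm (tag i),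
      payoff lam eta w (Tagged (pol Adm) v) x <= payoff lam eta w i x.

Definition basis_vec (R : realType) (I : finType) (i : I) : 'rV[R]_#|I| :=
  \row_j ((j == enum_rank i)%:R).

(* Main.v *)
Require Import Defs.
From HB Require Import structures.
From mathcomp Require Import all_boot all_order all_algebra.
From mathcomp Require Import all_classical all_reals all_analysis.
From mathcomp Require Import ring lra.
Set Implicit Arguments. Unset Strict Implicit. Unset Printing Implicit Defensive.
Import Order.TTheory GRing.Theory Num.Theory.
Import numFieldNormedType.Exports.
Local Open Scope classical_set_scope.
Local Open Scope ring_scope.
Section Anti.
Context {R : realType}.
Notation mu := (@lebesgue_measure R).
Definition Ig (f : R -> R) (a b : R) : R := \int[mu]_(t in `[a, b]) f t.

Lemma Ig_int (f : R -> R) (cf : continuous f) a b :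
  mu.-integrable `[a, b] (EFin \o f).
Proof.
apply: continuous_compact_integrable; first exact: segment_compact.
exact: continuous_subspaceT.
Qed.

Lemma base_indep (f : R -> R) (cf : continuous f) b1 b2 z :
  b1 <= b2 -> b2 <= z -> Ig f b1 z - Ig f b2 z = Ig f b1 b2.
Proof.
move=> h1 h2.
have := @Rintegral_itvB R f (BLeft b1) (BRight z) b2 (Ig_int cf b1 z).
rewrite !bnd_simp => /(_ h1 h2).
rewrite Rintegral_itv_obnd_cbnd; last first.
  apply: integrableS (Ig_int cf b1 z) => //.
  by apply: subset_itvr; rewrite bnd_simp.
rewrite /Ig => <-.
set A := \int[mu]_(t in _) _. lra.
Qed.

Lemma base_indep2 (f : R -> R) (cf : continuous f) b1 b2 y :
  b1 <= b2 -> b2 <= Num.min y 0 ->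
  Ig f b1 y - Ig f b1 0 = Ig f b2 y - Ig f b2 0.
Proof.
move=> h1; rewrite le_min => /andP[h2 h3].
have e1 := base_indep cf h1 h2.
have e2 := base_indep cf h1 h3.
lra.
Qed.

Definition Wf (f : R -> R) (z : R) : R :=
  Ig f (Num.min z 0 - 1) z - Ig f (Num.min z 0 - 1) 0.

Lemma Wf_gen (f : R -> R) (cf : continuous f) b y :
  b <= Num.min y 0 -> Ig f b y - Ig f b 0 = Wf f y.
Proof.
move=> hb; rewrite /Wf.
have [h|h] := lerP b (Num.min y 0 - 1).
  by apply: base_indep2 => //; rewrite lerBlDr lerDl.
symmetry; apply: base_indep2 => //; exact: ltW.
Qed.

Lemma antideriv (f : R -> R) (cf : continuous f) :
  forall z, derivable (Wf f) z 1 /\ derive1 (Wf f) z = f z.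
Proof.
move=> z.
set b := Num.min z 0 - 1.
have zz : z < z + 1 by rewrite ltrDl.
have bz : (BLeft b < BRight z)%E.
  have : Num.min z 0 <= z by rewrite ge_min lexx.
  by rewrite /= lte_fin /b; lra.
have [dG G'] := @continuous_FTC1 R f (BLeft b) z (z + 1) zz
   (Ig_int cf b (z + 1)) bz (cf z).
pose G := fun x : R => \int[mu]_(t in `[b, x]) f t.
rewrite -/G in dG G'.
have near_eq : {near z, (G \- cst (Ig f b 0)) =1 Wf f}.
  near=> y.
  have hy : z - 1 < y by near: y; apply: lt_nbhsr; rewrite ltrBlDr ltrDl.
  rewrite /= -(@Wf_gen f cf b y) //.
  have : Num.min z 0 <= z by rewrite ge_min lexx.
  have : Num.min z 0 <= 0 by rewrite ge_min lexx orbT.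
  rewrite le_min /b => ? ?; apply/andP; split; lra.
have dG2 : derivable (G \- cst (Ig f b 0)) z 1.
  apply: derivableB; first exact: dG.
  exact: derivable_cst.
split; first exact: (near_eq_derivable near_eq dG2).
have e := @near_eq_derive R R^o R^o _ _ z 1 near_eq.
rewrite derive1E -e.
have -> : G \- cst (Ig f b 0) = G - cst (Ig f b 0) by [].
rewrite (deriveB dG (derivable_cst _ _ _)).
rewrite derive_cst subr0 -derive1E; exact: G'.
Unshelve. all: by end_near.
Qed.
End Anti.

Section Diff.
Context {R : realType} {V : normedModType R}.

Lemma diff_sum_seq (T : Type) (s : seq T) (g : T -> V -> R) (x : V) :
  (forall t, differentiable (g t) x) ->
  differentiable (fun y => \sum_(t <- s) g t y) x.
Proof.
move=> hg; elim: s => [|t s IH].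
  under eq_fun => y do rewrite big_nil.
  exact: differentiable_cst.
under eq_fun => y do rewrite big_cons.
exact: (differentiableD (hg t) IH).
Qed.

Lemma diff_scal (k : R) (g : V -> R) (x : V) :
  differentiable g x -> differentiable (fun y => k * g y) x.
Proof. move=> dg; exact: (differentiableZ k dg). Qed.

Lemma diff_mul (f g : V -> R) (x : V) :
  differentiable f x -> differentiable g x -> differentiable (fun y => f y * g y) x.
Proof. move=> df dg; exact: (differentiableM df dg). Qed.

Lemma diff_comp1 (f : V -> R) (g : R -> R) (x : V) :
  differentiable f x -> derivable g (f x) 1 -> differentiable (fun y => g (f y)) x.
Proof.
move=> df dg; apply: (differentiable_comp df).
by apply/derivable1_diffP.
Qed.

Lemma is_derive_sum_seq (T : Type) (s : seq T) (g : T -> V -> R) (d : T -> R)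
  (x v : V) : (forall t, is_derive x v (g t) (d t)) ->
  is_derive x v (fun y => \sum_(t <- s) g t y) (\sum_(t <- s) d t).
Proof.
move=> hg; elim: s => [|t s IH].
  rewrite big_nil; under eq_fun => y do rewrite big_nil.
  exact: is_derive_cst.
rewrite big_cons; under eq_fun => y do rewrite big_cons.
exact: (is_deriveD (hg t) IH).
Qed.

Lemma diff_sub (f g : V -> R) (x : V) :
  differentiable f x -> differentiable g x -> differentiable (fun y => f y - g y) x.
Proof. move=> df dg; exact: (differentiableB df dg). Qed.

End Diff.

Lemma closed_forall (T : topologicalType) (J : Type) (P : J -> set T) :
  (forall j, closed (P j)) -> closed [set x | forall j, P j x].
Proof.
move=> h.
rewrite (_ : [set x | forall j, P j x] = \bigcap_(j in setT) P j).
  by apply: closed_bigI => j _; exact: h.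
by apply/seteqP; split => x /= H j; [move=> _; exact: H | exact: H j Logic.I].
Qed.

Lemma closed_ge0_fun (T : topologicalType) (R : realType) (g : T -> R) :
  continuous g -> closed [set x | 0 <= g x].
Proof.
move=> cg; apply: (@preimage_closed T R g [set y | 0 <= y]).
  by move=> x _; exact: cg.
exact: closed_ge.
Qed.

Lemma closed_eq_fun (T : topologicalType) (R : realType) (g : T -> R) (a : R) :
  continuous g -> closed [set x | g x = a].
Proof.
move=> cg; apply: (@preimage_closed T R g [set y | y = a]).
  by move=> x _; exact: cg.
exact: closed_eq.
Qed.


Lemma diff_coordv (R : realType) n (j : 'I_n) (x : 'rV[R]_n) :
  differentiable (fun y : 'rV[R]_n => y ord0 j) x.
Proof. exact: differentiable_coord. Qed.
Lemma deriveD1 (R : realType) (V : normedModType R) (f : V -> R) (x v : V) :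
  'D_v f x = 'D_1 (fun h : R => f (h *: v + x)) 0.
Proof.
rewrite /derive.
suff -> : (fun h : R => h^-1 *: ((f \o shift x) (h *: v) - f x)) =
  (fun h : R => h^-1 *: (((fun h0 : R => f (h0 *: v + x)) \o shift 0) h%:A
      - f (0 *: v + x))) by [].
apply/funext => h /=.
by rewrite addr0 scale0r add0r [_%:A]mulr1 addrC.
Qed.

Lemma derive1_affine (R : realType) (g : R -> R) (a b : R) :
  derivable g a 1 ->
  derivable (fun h : R => g (a + h * b)) 0 1 /\
  'D_1 (fun h : R => g (a + h * b)) 0 = b * 'D_1 g a.
Proof.
move=> dg.
have e : (fun h : R => a + h * b) = cst a + b *: (@id R).
  by apply/funext=> h /=; rewrite mulrC.
have hd : is_derive (0:R) (1:R) (fun h : R => a + h * b) (0 + b *: (1:R)).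
  rewrite e; apply: is_deriveD.
have di : derivable (fun h : R => a + h * b) 0 1 by case: hd.
have dgi : derivable g ((fun h : R => a + h * b) 0) 1 by rewrite mul0r addr0.
split.
  apply/derivable1_diffP; apply: differentiable_comp; first exact/derivable1_diffP.
  exact/derivable1_diffP.
have := derive1_comp di dgi; rewrite !derive1E => ->.
rewrite /= mul0r addr0 mulrC; congr (_ * _).
rewrite (@derive_val _ _ _ _ _ _ _ hd) add0r.
exact: mulr1.
Qed.
Unset Implicit Arguments.
Section Model.
Context (R : realType) (Cl Rs : finType) (St : Cl -> finType)
  (Adm : forall c, St c -> {set {set Rs}}) (lam : R)
  (eta : forall c, pol Adm c -> St c -> R) (w : Rs -> R -> R).

Local Notation I := (idx Adm).
Local Notation V := 'rV[R]_#|I|.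

Definition acoef (r : Rs) (i : I) : R :=
  \sum_(s : St (tag i) | r \in val (tagged i) s) eta (tag i) (tagged i) s.

Definition Sf (x : V) (r : Rs) : R := \sum_i acoef r i * Defs.coord x i.

Lemma sigmaE x r : sigma lam eta x r = lam * Sf x r.
Proof.
rewrite /sigma /Sf; congr (_ * _); apply: eq_bigr => i _.
by rewrite /acoef mulr_suml.
Qed.

Lemma payoffE i x :
  payoff lam eta w i x = \sum_r acoef r i * w r (sigma lam eta x r).
Proof.
rewrite /payoff /acoef.
under eq_bigr => s _ do rewrite mulr_sumr big_mkcond /=.
rewrite exchange_big /=; apply: eq_bigr => r _.
rewrite mulr_suml [RHS]big_mkcond /=; apply: eq_bigr => s _.
by case: ifP; rewrite ?mul0r.
Qed.

Lemma dotE (x y : V) :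
  \sum_i payoff lam eta w i x * (Defs.coord y i - Defs.coord x i) =
  \sum_r w r (sigma lam eta x r) * (Sf y r - Sf x r).
Proof.
under eq_bigr => i _ do rewrite payoffE mulr_suml.
rewrite exchange_big /=; apply: eq_bigr => r _.
rewrite /Sf -sumrB mulr_sumr; apply: eq_bigr => i _.
by rewrite -mulrBr mulrCA mulrA.
Qed.

Lemma sum_idx (G : I -> R) :
  \sum_i G i = \sum_c \sum_(u : pol Adm c) G (Tagged (pol Adm) u).
Proof.
rewrite (sig_big_dep (fun _ => true) (fun _ _ => true)
          (fun c (u : pol Adm c) => G (Tagged (pol Adm) u))) /=.
by apply: eq_bigr => -[c u].
Qed.

Lemma nash_VI (mass : Cl -> R) (hmass : forall c, 0 < mass c) (x y : V) :
  nash mass lam eta w x -> Xset mass y ->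
  \sum_r w r (sigma lam eta x r) * (Sf y r - Sf x r) <= 0.
Proof.
move=> [[hx0 hxm] hN] [hy0 hym].
rewrite -dotE sum_idx; apply: sumr_le0 => c _.
set F := fun u : pol Adm c => payoff lam eta w (Tagged (pol Adm) u) x.
set X := fun u : pol Adm c => Defs.coord x (Tagged (pol Adm) u).
set Y := fun u : pol Adm c => Defs.coord y (Tagged (pol Adm) u).
rewrite -/F.
under eq_bigr => u _ do rewrite -/(F u) -/(X u) -/(Y u) mulrBr.
rewrite sumrB subr_le0.
rewrite -(ler_pM2l (hmass c)).
rewrite {1}(_ : mass c = \sum_u X u); last by rewrite -hxm.
rewrite (_ : mass c = \sum_u Y u); last by rewrite -hym.
rewrite !mulr_suml.
under eq_bigr => u _ do rewrite mulr_sumr.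
under [X in _ <= X]eq_bigr => u _ do rewrite mulr_sumr.
rewrite [X in _ <= X]exchange_big /=.
apply: ler_sum => u _; apply: ler_sum => v _.
have Xu0 : 0 <= X u by exact: hx0.
have Yv0 : 0 <= Y v by exact: hy0.
move: (Xu0); rewrite le_eqVlt => /orP[/eqP Xu|Xup].
  by rewrite -Xu !(mul0r, mulr0).
have := hN (Tagged (pol Adm) u) Xup v; rewrite -/(F v) -/(F u) => hFv.
have h3 : 0 <= F u - F v by rewrite subr_ge0.
have := mulr_ge0 (mulr_ge0 Xu0 Yv0) h3.
nra.
Qed.

Lemma Sf_ge0 (heta0 : forall c u s, 0 <= eta c u s) (mass : Cl -> R) x r :
  Xset mass x -> 0 <= Sf x r.
Proof.
move=> [hx0 _]; apply: sumr_ge0 => i _; apply: mulr_ge0 => //.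
by apply: sumr_ge0 => s _.
Qed.

Lemma nash_terms (mass : Cl -> R) (hmass : forall c, 0 < mass c)
  (heta0 : forall c u s, 0 <= eta c u s) (hlam : 0 < lam)
  (hmon : forall r a b, 0 <= a -> 0 <= b -> a <= b -> w r b <= w r a)
  x y : nash mass lam eta w x -> nash mass lam eta w y ->
  forall r, (w r (sigma lam eta x r) - w r (sigma lam eta y r)) *
            (Sf y r - Sf x r) = 0.
Proof.
move=> hx hy.
have h1 := @nash_VI mass hmass _ _ hx hy.1.
have h2 := @nash_VI mass hmass _ _ hy hx.1.
have hT : forall r, 0 <= (w r (sigma lam eta x r) - w r (sigma lam eta y r)) *
            (Sf y r - Sf x r).
  move=> r; rewrite !sigmaE.
  have sx := @Sf_ge0 heta0 mass x r hx.1; have sy := @Sf_ge0 heta0 mass y r hy.1.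
  have [le|lt] := lerP (Sf x r) (Sf y r).
    apply: mulr_ge0; last by rewrite subr_ge0.
    rewrite subr_ge0; apply: hmon;
      [exact: mulr_ge0 (ltW hlam) sx | exact: mulr_ge0 (ltW hlam) sy | by rewrite ler_pM2l].
  apply: mulr_le0; last by rewrite subr_le0 ltW.
  rewrite subr_le0; apply: hmon;
    [exact: mulr_ge0 (ltW hlam) sy | exact: mulr_ge0 (ltW hlam) sx | by rewrite ler_pM2l // ltW].
have hsum : \sum_r (w r (sigma lam eta x r) - w r (sigma lam eta y r)) *
            (Sf y r - Sf x r) <= 0.
  have -> : \sum_r (w r (sigma lam eta x r) - w r (sigma lam eta y r)) *
            (Sf y r - Sf x r) = \sum_r w r (sigma lam eta x r) * (Sf y r - Sf x r)
         + \sum_r w r (sigma lam eta y r) * (Sf x r - Sf y r).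
    by rewrite -big_split /=; apply: eq_bigr => r _; ring.
  have := lerD h1 h2; rewrite addr0; exact.
have := (@psumr_eq0P _ _ xpredT _ (fun r _ => hT r)).
move=> /(_ _) H r; apply: H => //.
by apply/eqP; rewrite eq_le hsum sumr_ge0.
Qed.

Lemma nash_sigma_eq (mass : Cl -> R) (hmass : forall c, 0 < mass c)
  (heta0 : forall c u s, 0 <= eta c u s) (hlam : 0 < lam)
  (hstr : forall r a b, 0 <= a -> 0 <= b -> a < b -> w r b < w r a)
  x y : nash mass lam eta w x -> nash mass lam eta w y ->
  forall r, sigma lam eta x r = sigma lam eta y r.
Proof.
move=> hx hy r.
have hmon : forall r a b, 0 <= a -> 0 <= b -> a <= b -> w r b <= w r a.
  move=> r' a b ha hb; rewrite le_eqVlt => /orP[/eqP ->//|ab].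
  exact/ltW/hstr.
have := @nash_terms mass hmass heta0 hlam hmon x y hx hy r.
have sx := @Sf_ge0 heta0 mass x r hx.1; have sy := @Sf_ge0 heta0 mass y r hy.1.
rewrite !sigmaE; move/eqP; rewrite mulf_eq0 => /orP[|]; last first.
  by rewrite subr_eq0 => /eqP ->.
rewrite subr_eq0 => /eqP hw.
have [lt|gt|->] := ltgtP (Sf x r) (Sf y r) => //.
  have hlt : lam * Sf x r < lam * Sf y r by rewrite ltr_pM2l.
  have := hstr r _ _ (mulr_ge0 (ltW hlam) sx) (mulr_ge0 (ltW hlam) sy) hlt.
  by rewrite hw ltxx.
have hlt : lam * Sf y r < lam * Sf x r by rewrite ltr_pM2l.
have := hstr r _ _ (mulr_ge0 (ltW hlam) sy) (mulr_ge0 (ltW hlam) sx) hlt.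
by rewrite hw ltxx.
Qed.

Lemma nash_conv (mass : Cl -> R) (hmass : forall c, 0 < mass c)
  (heta0 : forall c u s, 0 <= eta c u s) (hlam : 0 < lam)
  (hmon : forall r a b, 0 <= a -> 0 <= b -> a <= b -> w r b <= w r a)
  x y (t : R) : 0 <= t -> t <= 1 ->
  nash mass lam eta w x -> nash mass lam eta w y ->
  nash mass lam eta w (t *: x + (1 - t) *: y).
Proof.
move=> t0 t1 hx hy.
set z := t *: x + (1 - t) *: y.
have cz : forall i, Defs.coord z i = t * Defs.coord x i + (1 - t) * Defs.coord y i.
  by move=> i; rewrite /Defs.coord !mxE.
have Sz : forall r, Sf z r = t * Sf x r + (1 - t) * Sf y r.
  move=> r; rewrite /Sf !mulr_sumr -big_split /=; apply: eq_bigr => i _.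
  rewrite cz; ring.
have hw : forall r, w r (sigma lam eta z r) = w r (sigma lam eta x r) /\
                    w r (sigma lam eta y r) = w r (sigma lam eta x r).
  move=> r; have := @nash_terms mass hmass heta0 hlam hmon x y hx hy r.
  have sx := @Sf_ge0 heta0 mass x r hx.1; have sy := @Sf_ge0 heta0 mass y r hy.1.
  rewrite !sigmaE Sz; move/eqP; rewrite mulf_eq0 => /orP[|]; last first.
    rewrite subr_eq0 => /eqP ->.
    by rewrite (_ : t * Sf x r + (1 - t) * Sf x r = Sf x r) //; ring.
  rewrite subr_eq0 => /eqP hw.
  have hzx : 0 <= lam * (t * Sf x r + (1 - t) * Sf y r).
    by apply: mulr_ge0; [exact: ltW | nra].
  have hx0 : 0 <= lam * Sf x r by apply: mulr_ge0; [exact: ltW | done].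
  have hy0 : 0 <= lam * Sf y r by apply: mulr_ge0; [exact: ltW | done].
  split => //.
  have [le|le] := lerP (Sf x r) (Sf y r).
    have h1 : lam * Sf x r <= lam * (t * Sf x r + (1 - t) * Sf y r).
      by rewrite ler_pM2l //; nra.
    have h2 : lam * (t * Sf x r + (1 - t) * Sf y r) <= lam * Sf y r.
      by rewrite ler_pM2l //; nra.
    have := hmon r _ _ hx0 hzx h1; have := hmon r _ _ hzx hy0 h2.
    move=> a b; lra.
  have h1 : lam * Sf y r <= lam * (t * Sf x r + (1 - t) * Sf y r).
    by rewrite ler_pM2l //; nra.
  have h2 : lam * (t * Sf x r + (1 - t) * Sf y r) <= lam * Sf x r.
    by rewrite ler_pM2l //; nra.
  have := hmon r _ _ hy0 hzx h1; have := hmon r _ _ hzx hx0 h2.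
  move=> a b; lra.
have hp : forall i, payoff lam eta w i z = payoff lam eta w i x /\
                    payoff lam eta w i y = payoff lam eta w i x.
  move=> i; rewrite !payoffE; split; apply: eq_bigr => r _.
    by rewrite (hw r).1.
  by rewrite (hw r).2.
move: (hx) (hy) => [[hx0 hxm] hxN] [[hy0 hym] hyN].
split; first split.
- move=> i; rewrite cz; have := hx0 i; have := hy0 i; nra.
- move=> c; under eq_bigr => u _ do rewrite cz.
  by rewrite big_split /= -!mulr_sumr hxm hym; ring.
move=> i hz v.
rewrite (hp i).1 (hp (Tagged (pol Adm) v)).1.
have [xi|xi] := ltrP 0 (Defs.coord x i); first exact: hxN.
have yi : 0 < Defs.coord y i.
  rewrite cz in hz; have := hx0 i; have := hy0 i; nra.
by rewrite -(hp i).2 -(hp (Tagged (pol Adm) v)).2; exact: hyN.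
Qed.

Lemma coordE (x : V) i : Defs.coord x i = x ord0 (enum_rank i).
Proof. by []. Qed.

Lemma diff_coord (x : V) i : differentiable (fun y : V => Defs.coord y i) x.
Proof. exact: differentiable_coord. Qed.

Lemma diff_Sf (x : V) r : differentiable (fun y : V => Sf y r) x.
Proof.
rewrite /Sf; apply: diff_sum_seq => i.
exact: diff_scal (diff_coord x i).
Qed.

Lemma diff_sigma (x : V) r : differentiable (fun y : V => sigma lam eta y r) x.
Proof.
under eq_fun => y do rewrite sigmaE.
exact: diff_scal (diff_Sf x r).
Qed.

Lemma Sf_lin (x v : V) (h : R) r : Sf (h *: v + x) r = Sf x r + h * Sf v r.
Proof.
rewrite /Sf mulr_sumr -big_split /=; apply: eq_bigr => i _.
rewrite /Defs.coord !mxE; ring.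
Qed.

Lemma Sf_basis (i : I) r : Sf (basis_vec R i) r = acoef r i.
Proof.
rewrite /Sf (bigD1 i) //= /Defs.coord mxE eqxx mulr1 big1 ?addr0 // => j ji.
rewrite mxE (inj_eq enum_rank_inj) (negPf ji) mulr0 //.
Qed.

Definition Upot (x : V) : R := \sum_r lam^-1 * Wf (w r) (sigma lam eta x r).

Lemma Upot_D (hcw : forall r, continuous (w r)) (hlam : lam != 0) (x : V) (i : I) :
  'D_(basis_vec R i) Upot x = payoff lam eta w i x.
Proof.
rewrite deriveD1 /Upot.
set e := basis_vec R i.
have hr : forall r, is_derive (0:R) (1:R)
    (fun h : R => lam^-1 * Wf (w r) (sigma lam eta (h *: e + x) r))
    (lam^-1 * ((lam * acoef r i) * w r (sigma lam eta x r))).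
  move=> r.
  have -> : (fun h : R => lam^-1 * Wf (w r) (sigma lam eta (h *: e + x) r)) =
      (fun h : R => lam^-1 * Wf (w r) (sigma lam eta x r + h * (lam * acoef r i))).
    apply/funext => h; rewrite !sigmaE Sf_lin Sf_basis; congr (_ * Wf _ _); ring.
  have [dW W'] := antideriv (hcw r) (sigma lam eta x r).
  have [da Da] := derive1_affine (lam * acoef r i) dW.
  rewrite derive1E in W'.
  rewrite -W' -Da.
  exact: (is_deriveZ lam^-1 (derivableP da)).
have := is_derive_sum_seq (index_enum Rs) hr.
move=> /(@derive_val _ _ _ _ _ _ _) ->.
rewrite payoffE; apply: eq_bigr => r _.
by rewrite mulrA mulrA mulVf // mul1r.
Qed.

Lemma diff_Upot (hcw : forall r, continuous (w r)) (x : V) : differentiable Upot x.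
Proof.
rewrite /Upot; apply: diff_sum_seq => r; apply: diff_scal; apply: diff_comp1.
  exact: diff_sigma.
exact: (antideriv (hcw r) _).1.
Qed.

Lemma cont_payoff (hwd : forall r z, derivable (w r) z 1) (i : I) :
  continuous (fun x : V => payoff lam eta w i x).
Proof.
move=> x; apply: differentiable_continuous.
under eq_fun => y do rewrite payoffE.
apply: diff_sum_seq => r; apply: diff_scal; apply: diff_comp1.
  exact: diff_sigma.
exact: hwd.
Qed.

Lemma part1 (mass : Cl -> R) (hlam : 0 < lam)
  (hwd : forall r z, derivable (w r) z 1) :
  exists U : V -> R,
      (forall x, differentiable U x) /\
      (forall i : I, continuous (fun x => 'D_(basis_vec R i) U x)) /\
      (forall x, Xset mass x ->
         forall i : I, payoff lam eta w i x = 'D_(basis_vec R i) U x).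
Proof.
have hcw : forall r, continuous (w r).
  move=> r z; apply: differentiable_continuous; apply/derivable1_diffP; exact: hwd.
have hl : lam != 0 by rewrite gt_eqF.
exists Upot; split; first exact: diff_Upot.
split.
  move=> i; rewrite (_ : (fun x => _) = (fun x => payoff lam eta w i x)).
    exact: cont_payoff.
  by apply/funext => x; rewrite Upot_D.
by move=> x _ i; rewrite Upot_D.
Qed.

Lemma diff_payoff (hwd : forall r z, derivable (w r) z 1) (i : I) (x : V) :
  differentiable (fun x : V => payoff lam eta w i x) x.
Proof.
under eq_fun => y do rewrite payoffE.
apply: diff_sum_seq => r; apply: diff_scal; apply: diff_comp1.
  exact: diff_sigma.
exact: hwd.
Qed.

Lemma nash_closed (mass : Cl -> R) (hwd : forall r z, derivable (w r) z 1) :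
  closed [set x : V | nash mass lam eta w x].
Proof.
have -> : [set x : V | nash mass lam eta w x] =
   [set x | forall i, [set x : V | 0 <= Defs.coord x i] x] `&`
   [set x | forall c, [set x : V | \sum_(u : pol Adm c) Defs.coord x (Tagged (pol Adm) u) = mass c] x] `&`
   [set x | forall i, [set x | forall v : pol Adm (tag i),
      [set x : V | 0 <= Defs.coord x i * (payoff lam eta w i x -
                       payoff lam eta w (Tagged (pol Adm) v) x)] x] x].
  apply/seteqP; split => x /=.
    move=> [[hx0 hxm] hN]; split; first by split.
    move=> i v; have := hx0 i; rewrite le_eqVlt => /orP[/eqP <-|hp].
      by rewrite mul0r.
    by apply: mulr_ge0; [exact: ltW | rewrite subr_ge0; exact: hN].
  move=> [[hx0 hxm] hN]; split; first by split.
  move=> i hp v; have := hN i v; rewrite pmulr_rge0 // subr_ge0; exact.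
apply: closedI; first apply: closedI.
- apply: closed_forall => i; apply: closed_ge0_fun => x.
  exact/differentiable_continuous/diff_coord.
- apply: closed_forall => c; apply: closed_eq_fun => x.
  apply/differentiable_continuous/diff_sum_seq => u; exact: diff_coord.
- apply: closed_forall => i; apply: closed_forall => v; apply: closed_ge0_fun => x.
  apply/differentiable_continuous/diff_mul; first exact: diff_coord.
  by apply: diff_sub; exact: diff_payoff.
Qed.

Lemma nash_compact (mass : Cl -> R) (hmass : forall c, 0 < mass c)
  (hwd : forall r z, derivable (w r) z 1) :
  compact [set x : V | nash mass lam eta w x].
Proof.
set M := \sum_c mass c.
have cB := @rV_compact R #|I| (fun _ => `[0, M]%classic) (fun _ => @segment_compact R 0 M).
apply: (subclosed_compact (nash_closed mass hwd) cB).
move=> x [[hx0 hxm] _] j /=.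
have -> : x ord0 j = Defs.coord x (enum_val j) by rewrite coordE enum_valK.
move: (enum_val j) => i.
rewrite in_itv /=; apply/andP; split; first exact: hx0.
case: i => c u.
apply: (@le_trans _ _ (mass c)).
  rewrite -(hxm c) (bigD1 u) //= lerDl; apply: sumr_ge0 => v _; exact: hx0.
rewrite /M (bigD1 c) //= lerDl; apply: sumr_ge0 => d _; exact/ltW.
Qed.

End Model.

Theorem lemma4 (R : realType) (Cl Rs : finType) (St : Cl -> finType)
  (mass : Cl -> R)
  (Adm : forall c, St c -> {set {set Rs}})
  (phi : forall c, St c -> St c -> {set Rs} -> R)
  (lam : R)
  (eta : forall c, pol Adm c -> St c -> R)
  (w : Rs -> R -> R)
  (hmass : forall c, 0 < mass c)
  (hAdm : forall c s, exists a, a \in Adm c s)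
  (hphi0 : forall c s' s a, a \in Adm c s -> 0 <= phi c s' s a)
  (hphi1 : forall c s a, a \in Adm c s -> \sum_(s' : St c) phi c s' s a = 1)
  (hlam : 0 < lam)
  (hA2 : A2 Adm phi)
  (heta : forall c (u : pol Adm c), ct_stationary phi lam u (eta c u))
  (hwd : forall r x, derivable (w r) x 1)
  (hwc : forall r, continuous (derive1 (w r))) :
  (exists U : 'rV[R]_#|idx Adm| -> R,
      (forall x, differentiable U x) /\
      (forall i : idx Adm, continuous (fun x => 'D_(basis_vec R i) U x)) /\
      (forall x, Xset mass x ->
         forall i : idx Adm, payoff lam eta w i x = 'D_(basis_vec R i) U x))
  /\
  ((forall r, {in `[0, +oo[ &, {homo w r : a b /~ a <= b}}) ->
      compact [set x | nash mass lam eta w x] /\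
      convex_set ([set x | nash mass lam eta w x]
                    : set (convex_lmodType 'rV[R]_#|idx Adm|)))
  /\
  ((forall r, {in `[0, +oo[ &, {homo w r : a b /~ a < b}}) ->
      forall x y, nash mass lam eta w x -> nash mass lam eta w y ->
        forall r, sigma lam eta x r = sigma lam eta y r).

Proof.
have heta0 : forall c u s, 0 <= eta c u s by move=> c u s; exact: (heta c u).1.
split; first exact: (part1 _ _ _ _ Adm lam eta w mass hlam hwd).
split.
  move=> H.
  have hmon : forall r a b, 0 <= a -> 0 <= b -> a <= b -> w r b <= w r a.
    move=> r a b ha hb ab; apply: (H r) => //; rewrite ?in_itv /= ?ha ?hb //.
  split; first exact: (nash_compact _ _ _ _ Adm lam eta w mass hmass hwd).
  move=> x y l; rewrite !inE => hx hy.
  have l0 : 0 <= l%:num by apply: ge0.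
  have l1 : l%:num <= 1 by apply: le1.
  have := nash_conv _ _ _ _ Adm lam eta w mass hmass heta0 hlam hmon x y (l%:num)
    l0 l1 hx hy.
  by [].
move=> H.
have hstr : forall r a b, 0 <= a -> 0 <= b -> a < b -> w r b < w r a.
  move=> r a b ha hb ab; apply: (H r) => //; rewrite ?in_itv /= ?ha ?hb //.
move=> x y hx hy r.
exact: (nash_sigma_eq _ _ _ _ Adm lam eta w mass hmass heta0 hlam hstr x y hx hy r).
Qed.
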